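(* Let $f(z)=z+\sum_{k=2}^{\infty}a_kz^k$ be analytic in $\mathbb{D}=\{z:|z|<1\}$ with $zf'(z)-f(z)=\frac12 z^2\phi(z)$ for all $z\in\mathbb{D}$, where $\phi$ is analytic in $\mathbb{D}$ and $|\phi(z)|\le1$, and let $s_n(z;f)=z+\sum_{k=2}^n a_kz^k$. Then for each $r\in(0,1)$ and $n\ge2$, \[\left|\frac{s_n'(z;f)}{f'(z)}-1\right|\le |z|^n\left(\frac{n+1}{2n}+B_n\frac{|z|}{r-|z|}\right),\qquad |z|<r,\] where $B_n=\dfrac{\sqrt{2r-r^2}}{2(1-r)r^n}\bigl(n+1+\ln(n-1)+\gamma\bigr)$ and $\gamma\approx0.57722$ is the Euler–Mascheroni constant. *)

(* Defs.v *)
From Stdlib Require Import Reals.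
From Coquelicot Require Export Coquelicot.
Open Scope R_scope.

Definition harmonic (n : nat) : R := sum_f_R0 (fun k => / INR (S k)) (pred n).
Definition euler_gamma : R :=
  real (Lim_seq (fun n => harmonic n - ln (INR n))).

(* Derivative of the partial sum s_n(z;f) = sum_{k=0}^n a_k z^k
   (with a_0 = 0, a_1 = 1):  s_n'(z) = sum_{k=1}^n k a_k z^(k-1). *)
Fixpoint sn_deriv (a : nat -> C) (n : nat) (z : C) : C :=
  match n with
  | O => RtoC 0
  | S m => Cplus (sn_deriv a m z) (Cmult (RtoC (INR (S m))) (Cmult (a (S m)) (Cpow z m)))
  end.

Definition B_const (r : R) (n : nat) : R :=
  sqrt (2 * r - r ^ 2) / (2 * (1 - r) * r ^ n)
  * (INR n + 1 + ln (INR n - 1) + euler_gamma).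

(* Main.v *)
Require Import Defs.
From Stdlib Require Import Reals Lra Lia Psatz.
From Coquelicot Require Import Coquelicot.
Open Scope R_scope.


Definition CS (u : nat -> C) (l : C) := @is_series C_AbsRing C_NormedModule u l.

Lemma pow_n_C (w : C) k : @pow_n C_AbsRing w k = Cpow w k.
Proof. induction k; simpl; [reflexivity| rewrite IHk; reflexivity]. Qed.

Lemma CS_lim u l : CS u l -> forall eps, 0 < eps ->
  exists N, forall n, (N <= n)%nat -> Cmod (Cminus (sum_n u n) l) < eps.
Proof.
  intros H eps Heps.
  unfold CS, is_series in H.
  assert (H2 := locally_le_locally_norm (K:=C_AbsRing) (V:=C_NormedModule) l).
  destruct (H (fun y => Cmod (Cminus y l) < eps)) as [N HN].
  - apply H2. exists (mkposreal eps Heps). intros y Hy. exact Hy.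
  - exists N. intros n Hn. apply HN. lia.
Qed.

Lemma CS_of_lim u l : (forall eps, 0 < eps ->
  exists N, forall n, (N <= n)%nat -> Cmod (Cminus (sum_n u n) l) < eps) -> CS u l.
Proof.
  intros H. unfold CS, is_series. intros P [eps HP].
  destruct (H eps (cond_pos eps)) as [N HN].
  exists N. intros n Hn. apply HP.
  apply (norm_compat1 (K:=C_AbsRing) (V:=C_NormedModule)). apply HN. lia.
Qed.

Lemma RS_lim v L : is_series v L -> forall eps, 0 < eps ->
  exists N, forall n, (N <= n)%nat -> Rabs (@sum_n R_AbelianMonoid v n - L) < eps.
Proof.
  intros H eps Heps.
  unfold is_series in H.
  assert (H2 := locally_le_locally_norm (K:=R_AbsRing) (V:=R_NormedModule) L).
  destruct (H (fun y => Rabs (y - L) < eps)) as [N HN].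
  - apply H2. exists (mkposreal eps Heps). intros y Hy. exact Hy.
  - exists N. intros n Hn. apply HN. lia.
Qed.

Lemma RS_of_lim v L : (forall eps, 0 < eps ->
  exists N, forall n, (N <= n)%nat -> Rabs (@sum_n R_AbelianMonoid v n - L) < eps) -> is_series v L.
Proof.
  intros H. unfold is_series. intros P [eps HP].
  destruct (H eps (cond_pos eps)) as [N HN].
  exists N. intros n Hn. apply HP.
  apply (norm_compat1 (K:=R_AbsRing) (V:=R_NormedModule)). apply HN. lia.
Qed.

Lemma sum_n_Re u n : sum_n (fun k => Re (u k)) n = Re (sum_n u n).
Proof.
  induction n.
  - rewrite !sum_O. reflexivity.
  - rewrite !sum_Sn, IHn. reflexivity.
Qed.

Lemma CS_Re u l : CS u l -> is_series (fun k => Re (u k)) (Re l).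
Proof.
  intros H. apply RS_of_lim. intros eps Heps.
  destruct (CS_lim u l H eps Heps) as [N HN]. exists N. intros n Hn.
  rewrite sum_n_Re.
  eapply Rle_lt_trans; [|apply (HN n Hn)].
  replace (Re (sum_n u n) - Re l) with (Re (Cminus (sum_n u n) l)).
  - apply re_le_Cmod.
  - destruct (sum_n u n), l. simpl. ring.
Qed.

Lemma CS_scal c u l : CS u l -> CS (fun k => Cmult c (u k)) (Cmult c l).
Proof. intros H. apply (is_series_scal_l (K:=C_AbsRing) (V:=C_NormedModule) c u l H). Qed.

Lemma CS_plus u v l1 l2 : CS u l1 -> CS v l2 -> CS (fun k => Cplus (u k) (v k)) (Cplus l1 l2).
Proof. intros H1 H2. apply (is_series_plus (K:=C_AbsRing) (V:=C_NormedModule) u v l1 l2 H1 H2). Qed.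

Lemma CS_opp u l : CS u l -> CS (fun k => Copp (u k)) (Copp l).
Proof. intros H1. apply (is_series_opp (K:=C_AbsRing) (V:=C_NormedModule) u l H1). Qed.

Lemma CS_minus u v l1 l2 : CS u l1 -> CS v l2 -> CS (fun k => Cminus (u k) (v k)) (Cminus l1 l2).
Proof. intros H1 H2. apply CS_plus; auto. apply CS_opp; auto. Qed.

Lemma CS_ext u v l : (forall k, u k = v k) -> CS u l -> CS v l.
Proof. intros H1 H2. apply (is_series_ext (K:=C_AbsRing) (V:=C_NormedModule) u v l H1 H2). Qed.

Lemma CS_unique u l1 l2 : CS u l1 -> CS u l2 -> l1 = l2.
Proof.
  intros H1 H2.
  assert (E1 : Re l1 = Re l2).
  { apply CS_Re in H1, H2.
    apply is_series_unique in H1. apply is_series_unique in H2. congruence. }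
  assert (E2 : Im l1 = Im l2).
  { apply (CS_scal (Copp Ci)) in H1. apply (CS_scal (Copp Ci)) in H2.
    apply CS_Re in H1, H2.
    apply is_series_unique in H1. apply is_series_unique in H2.
    destruct l1 as [x1 y1], l2 as [x2 y2]. simpl in *. lra. }
  destruct l1, l2. simpl in *. subst. reflexivity.
Qed.

Lemma sum_n_Cmod_le u v n : (forall k, Cmod (u k) <= v k) -> Cmod (sum_n u n) <= sum_n v n.
Proof.
  intros H. induction n.
  - rewrite !sum_O. apply H.
  - rewrite !sum_Sn. eapply Rle_trans; [apply Cmod_triangle|].
    apply Rplus_le_compat; [exact IHn| apply H].
Qed.

Lemma CS_norm_le u l v L : CS u l -> is_series v L -> (forall k, Cmod (u k) <= v k) -> Cmod l <= L.
Proof.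
  intros H1 H2 H3.
  destruct (Rle_or_lt (Cmod l) L) as [h|h]; [exact h|exfalso].
  set (e := (Cmod l - L) / 2).
  assert (He : 0 < e) by (unfold e; lra).
  destruct (CS_lim u l H1 e He) as [N1 HN1].
  destruct (RS_lim v L H2 e He) as [N2 HN2].
  specialize (HN1 (N1 + N2)%nat ltac:(lia)).
  specialize (HN2 (N1 + N2)%nat ltac:(lia)).
  assert (A := sum_n_Cmod_le u v (N1+N2) H3).
  assert (B : Cmod l <= Cmod (sum_n u (N1+N2)) + Cmod (Cminus (sum_n u (N1 + N2)) l)).
  { replace l with (Cplus (sum_n u (N1+N2)) (Copp (Cminus (sum_n u (N1 + N2)) l))) at 1.
    - eapply Rle_trans; [apply Cmod_triangle|]. rewrite Cmod_opp. lra.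
    - ring. }
  apply Rabs_def2 in HN2. unfold e in *. lra.
Qed.

Lemma sum_n_nonneg (v : nat -> R) n : (forall k, 0 <= v k) -> 0 <= sum_n v n.
Proof.
  intros H; induction n.
  - rewrite sum_O; auto.
  - rewrite sum_Sn. apply Rplus_le_le_0_compat; auto.
Qed.

Lemma le_sum_n (v : nat -> R) k N : (forall k, 0 <= v k) -> (k <= N)%nat -> v k <= sum_n v N.
Proof.
  intros H Hk. induction N.
  - replace k with 0%nat by lia. rewrite sum_O. lra.
  - rewrite sum_Sn. destruct (Nat.eq_dec k (S N)) as [->|Hne].
    + assert (0 <= sum_n v N) by (apply sum_n_nonneg; auto). change (plus (sum_n v N) (v (S N))) with (sum_n v N + v (S N)). lra.
    + assert (v k <= sum_n v N) by (apply IHN; lia). specialize (H (S N)).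
      change (plus (sum_n v N) (v (S N))) with (sum_n v N + v (S N)). lra.
Qed.

Lemma CS_bounded u l : CS u l -> exists M, forall k, Cmod (u k) <= M.
Proof.
  intros H.
  destruct (CS_lim u l H 1 Rlt_0_1) as [N HN].
  exists (2 + sum_n (fun j => Cmod (u j)) (S N)).
  intros k.
  assert (P : 0 <= sum_n (fun j => Cmod (u j)) (S N)) by (apply sum_n_nonneg; intros; apply Cmod_ge_0).
  destruct (Compare_dec.le_lt_dec k (S N)) as [hk|hk].
  - assert (Cmod (u k) <= sum_n (fun j => Cmod (u j)) (S N)).
    { apply (le_sum_n (fun j => Cmod (u j))); auto. intros; apply Cmod_ge_0. }
    lra.
  - destruct k as [|k]; [lia|].
    assert (E : u (S k) = Cminus (Cminus (sum_n u (S k)) l) (Cminus (sum_n u k) l)).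
    { rewrite sum_Sn. change (plus (sum_n u k) (u (S k))) with (Cplus (sum_n u k) (u (S k))).
      ring. }
    rewrite E. eapply Rle_trans.
    { unfold Cminus at 1. eapply Rle_trans; [apply Cmod_triangle|]. rewrite Cmod_opp. apply Rle_refl. }
    assert (h1 := HN (S k) ltac:(lia)). assert (h2 := HN k ltac:(lia)). lra.
Qed.


Lemma CS_shift1 u l : u 0%nat = RtoC 0 -> CS (fun k => u (S k)) l -> CS u l.
Proof.
  intros H0 H. apply (is_series_decr_1 (K:=C_AbsRing) (V:=C_NormedModule)).
  rewrite H0. change (plus l (opp (RtoC 0))) with (Cplus l (Copp (RtoC 0))).
  replace (Cplus l (Copp (RtoC 0))) with l by ring. exact H.
Qed.

Lemma CS_unshift1 u l : u 0%nat = RtoC 0 -> CS u l -> CS (fun k => u (S k)) l.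
Proof.
  intros H0 H. apply (is_series_incr_1 (K:=C_AbsRing) (V:=C_NormedModule)).
  rewrite H0. change (plus l (RtoC 0)) with (Cplus l (RtoC 0)).
  replace (Cplus l (RtoC 0)) with l by ring. exact H.
Qed.

Lemma derive_eps f z l : is_derive f z l -> forall eps, 0 < eps ->
  exists del, 0 < del /\ forall h, Cmod h < del ->
    Cmod (Cminus (Cminus (f (Cplus z h)) (f z)) (Cmult h l)) <= eps * Cmod h.
Proof.
  intros [_ Hd] eps Heps.
  specialize (Hd z (fun P HP => HP) (mkposreal eps Heps)).
  destruct Hd as [d Hd].
  exists d. split; [apply cond_pos|]. intros h Hh.
  assert (Hb : ball z d (Cplus z h)).
  { change (Cmod (Cminus (Cplus z h) z) < d). replace (Cminus (Cplus z h) z) with h by ring. exact Hh. }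
  specialize (Hd _ Hb). simpl in Hd.
  change (Cmod (Cminus (Cminus (f (Cplus z h)) (f z)) (Cmult (Cminus (Cplus z h) z) l))
     <= eps * Cmod (Cminus (Cplus z h) z)) in Hd.
  replace (Cminus (Cplus z h) z) with h in Hd by ring. exact Hd.
Qed.

Definition Ee (z h : C) (j : nat) : C :=
  Cminus (Cminus (Cpow (Cplus z h) (S j)) (Cpow z (S j))) (Cmult (RtoC (INR (S j))) (Cmult h (Cpow z j))).

Lemma Ee_rec z h j : Ee z h (S j) = Cplus (Cmult (Cplus z h) (Ee z h j)) (Cmult (RtoC (INR (S j))) (Cmult (Cmult h h) (Cpow z j))).
Proof.
  unfold Ee. rewrite !Cpow_S. rewrite (S_INR (S j)). rewrite RtoC_plus. simpl. ring.
Qed.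

Lemma Ee_bound z h rho : 0 < rho -> Cmod z <= rho -> Cmod (Cplus z h) <= rho -> forall j,
  rho * Cmod (Ee z h j) <= INR (S j) ^ 2 * Cmod h ^ 2 * rho ^ j.
Proof.
  intros Hr Hz Hzh. induction j.
  - unfold Ee. simpl. replace (Cminus (Cminus (Cmult (Cplus z h) (RtoC 1)) (Cmult z (RtoC 1))) (Cmult (RtoC 1) (Cmult h (RtoC 1)))) with (RtoC 0) by ring.
    rewrite Cmod_0. assert (0 <= Cmod h) by apply Cmod_ge_0. nra.
  - rewrite Ee_rec.
    assert (T := Cmod_triangle (Cmult (Cplus z h) (Ee z h j)) (Cmult (RtoC (INR (S j))) (Cmult (Cmult h h) (Cpow z j)))).
    rewrite !Cmod_mult, Cmod_R, Cmod_pow in T.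
    rewrite Rabs_right in T by (apply Rle_ge, pos_INR).
    assert (Hh := Cmod_ge_0 h). assert (HE := Cmod_ge_0 (Ee z h j)).
    assert (Hp : 0 <= rho ^ j) by (apply pow_le; lra).
    assert (Hzp : Cmod z ^ j <= rho ^ j) by (apply pow_incr; split; [apply Cmod_ge_0|exact Hz]).
    assert (HI := pos_INR (S j)).
    set (X := Cmod (Ee z h j)) in *. set (Y := Cmod (Cplus z h)) in *.
    set (m := INR (S j)) in *. set (c := Cmod h) in *.
    assert (B1 : rho * (Y * X) <= rho * (m ^ 2 * c ^ 2 * rho ^ j)).
    { replace (rho * (Y * X)) with (Y * (rho * X)) by ring.
      apply Rmult_le_compat; [apply Cmod_ge_0|apply Rmult_le_pos; lra|lra|lra]. }
    assert (B2 : rho * (m * (c * c * Cmod z ^ j)) <= rho * (m * (c * c * rho ^ j))).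
    { apply Rmult_le_compat_l; [lra|]. apply Rmult_le_compat_l; [lra|]. apply Rmult_le_compat_l; [nra|exact Hzp]. }
    assert (B3 : 0 <= c * c * rho ^ j * rho) by (repeat apply Rmult_le_pos; nra).
    replace (INR (S (S j))) with (m + 1) by (unfold m; rewrite (S_INR (S j)); ring).
    simpl. 
    apply Rle_trans with (rho * (Y * X + m * (c * c * Cmod z ^ j))).
    { apply Rmult_le_compat_l; lra. }
    assert (B4 : m * (c*c*rho^j*rho) <= 2 * m * (c*c*rho^j*rho) + (c*c*rho^j*rho)) by nra.
    simpl in B1. nra.
Qed.


Lemma ex_series_sq q : 0 < q < 1 -> ex_series (fun k => INR (S k) ^ 2 * q ^ k).
Proof.
  intros Hq.
  apply ex_series_ext with (fun k => Rabs (INR (S k) ^ 2 * q ^ k)).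
  { intros k. apply Rabs_right. apply Rle_ge. apply Rmult_le_pos; [apply pow_le, pos_INR| apply pow_le; lra]. }
  apply ex_series_DAlembert with (k := q).
  - lra.
  - intros n. apply Rmult_integral_contrapositive. split.
    + apply pow_nonzero. apply not_0_INR. lia.
    + apply pow_nonzero. lra.
  - apply is_lim_seq_spec. intros eps.
    destruct (archimed_cor1 (eps / 3)) as [N [HN HN0]].
    { assert (H := cond_pos eps). lra. }
    exists N. intros n Hn.
    assert (HS : 0 < INR (S n)) by (apply lt_0_INR; lia).
    set (x := / INR (S n)).
    assert (Hx0 : 0 < x) by (unfold x; apply Rinv_0_lt_compat; exact HS).
    assert (Hx1 : x <= / INR N).
    { unfold x. apply Rinv_le_contravar. apply lt_0_INR; lia. apply le_INR. lia. }
    assert (Hx2 : x <= 1).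
    { unfold x. rewrite <- Rinv_1. apply Rinv_le_contravar; [lra|]. rewrite S_INR. assert (0 <= INR n) by apply pos_INR. lra. }
    assert (E : INR (S (S n)) ^ 2 * q ^ S n / (INR (S n) ^ 2 * q ^ n) = q * (1 + x) ^ 2).
    { unfold x. rewrite (S_INR (S n)). change (q ^ S n) with (q * q ^ n). set (t := INR (S n)) in *. set (u := q ^ n). assert (u <> 0) by (apply pow_nonzero; lra). field. lra. }
    rewrite (Rabs_pos_eq (_ / _)).
    2:{ unfold Rdiv. apply Rmult_le_pos; [apply Rmult_le_pos; [apply pow_le, pos_INR|apply pow_le; lra]|].
        apply Rlt_le, Rinv_0_lt_compat. apply Rmult_lt_0_compat; [apply pow_lt; lra|apply pow_lt; lra]. }
    rewrite E.
    replace (q * (1 + x) ^ 2 - q) with (q * x * (2 + x)) by ring.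
    rewrite Rabs_pos_eq by (apply Rmult_le_pos; nra).
    assert (H := cond_pos eps). nra.
Qed.


Lemma Cmod_RtoC_pos (x : R) : 0 <= x -> Cmod (RtoC x) = x.
Proof. intros H. rewrite Cmod_R. apply Rabs_pos_eq; exact H. Qed.

Lemma termwise (a : nat -> C) (f fp : C -> C) (ha0 : a 0%nat = RtoC 0)
 (hf : forall w, Cmod w < 1 -> CS (fun k => Cmult (Cpow w k) (a k)) (f w))
 (hfp : forall w, Cmod w < 1 -> is_derive f w (fp w)) z (hz : Cmod z < 1) :
 CS (fun k => Cmult (Cpow z k) (Cmult (RtoC (INR (S k))) (a (S k)))) (fp z).
Proof.
  assert (Hz0 := Cmod_ge_0 z).
  set (r1 := (1 + Cmod z)/2).
  assert (Hr1 : Cmod z < r1 < 1) by (unfold r1; lra).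
  destruct (CS_bounded _ _ (hf (RtoC r1) ltac:(rewrite Cmod_RtoC_pos; lra))) as [M HM].
  assert (Ha : forall k, Cmod (a k) * r1 ^ k <= M).
  { intros k. specialize (HM k). rewrite Cmod_mult, Cmod_pow, Cmod_RtoC_pos in HM by lra. lra. }
  set (rho := (Cmod z + r1) / 2).
  assert (Hrho : Cmod z < rho < r1) by (unfold rho; lra).
  set (q := rho / r1).
  assert (Hq : 0 < q < 1).
  { unfold q. split. apply Rdiv_lt_0_compat; lra. apply Rmult_lt_reg_r with r1; [lra|]. field_simplify; lra. }
  assert (Ha' : forall k, Cmod (a (S k)) * rho ^ k <= (M / r1) * q ^ k).
  { intros k. replace rho with (q * r1) by (unfold q; field; lra).
    rewrite Rpow_mult_distr. specialize (Ha (S k)). simpl in Ha.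
    apply Rmult_le_reg_r with r1; [lra|].
    replace (Cmod (a (S k)) * (q ^ k * r1 ^ k) * r1) with (q ^ k * (Cmod (a (S k)) * (r1 * r1 ^ k))) by ring.
    replace (M / r1 * q ^ k * r1) with (q ^ k * M) by (field; lra).
    apply Rmult_le_compat_l; [apply pow_le; lra|exact Ha]. }
  assert (HSW := ex_series_sq q Hq).
  set (SW := Series (fun k => INR (S k) ^ 2 * q ^ k)).
  assert (HSW' : is_series (fun k => INR (S k) ^ 2 * q ^ k) SW) by (apply Series_correct; exact HSW).
  assert (HD : ex_series (K:=C_AbsRing) (V:=C_NormedModule) (fun k => Cmult (Cpow z k) (Cmult (RtoC (INR (S k))) (a (S k))))).
  { apply (ex_series_le (K:=C_AbsRing) (V:=C_CompleteNormedModule) _ (fun k => (M / r1) * (INR (S k) ^ 2 * q ^ k))).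
    - intros k. change (norm ?x) with (Cmod x).
      rewrite !Cmod_mult, Cmod_pow, Cmod_RtoC_pos by apply pos_INR.
      assert (h1 : Cmod z ^ k <= rho ^ k) by (apply pow_incr; lra).
      assert (h2 := Ha' k). assert (h3 := Cmod_ge_0 (a (S k))).
      assert (h4 : 1 <= INR (S k)) by (rewrite S_INR; assert (0 <= INR k) by apply pos_INR; lra).
      assert (h5 : 0 <= q ^ k) by (apply pow_le; lra).
      assert (h6 : Cmod z ^ k * (INR (S k) * Cmod (a (S k))) <= INR (S k) * (Cmod (a (S k)) * rho ^ k)).
      { replace (Cmod z ^ k * (INR (S k) * Cmod (a (S k)))) with (INR (S k) * (Cmod (a (S k)) * Cmod z ^ k)) by ring. apply Rmult_le_compat_l; [lra|]. apply Rmult_le_compat_l; lra. }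
      assert (h7 : 0 <= M / r1 * q ^ k) by (apply Rle_trans with (Cmod (a (S k)) * rho ^ k); [apply Rmult_le_pos; [lra|apply pow_le; lra]|exact h2]).
      eapply Rle_trans; [apply h6|].
      apply Rle_trans with (INR (S k) * (INR (S k) * (M / r1 * q ^ k))).
      { apply Rmult_le_compat_l; [lra|]. nra. }
      right. ring.
    - exact (ex_series_scal_l (K:=R_AbsRing) (V:=R_NormedModule) (M/r1) _ HSW). }
  destruct HD as [D HD]. change C in D.
  change (CS (fun k => Cmult (Cpow z k) (Cmult (RtoC (INR (S k))) (a (S k)))) D) in HD.
  set (K1 := M / (r1 * rho) * SW).
  assert (Hest : forall h, Cmod h < rho - Cmod z ->
     Cmod (Cminus (Cminus (f (Cplus z h)) (f z)) (Cmult h D)) <= Cmod h ^ 2 * K1).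
  { intros h Hh.
    assert (Hzh : Cmod (Cplus z h) <= rho) by (eapply Rle_trans; [apply Cmod_triangle|]; lra).
    assert (S1 : CS (fun k => Cmult (Cpow (Cplus z h) (S k)) (a (S k))) (f (Cplus z h))).
    { apply (CS_unshift1 (fun k => Cmult (Cpow (Cplus z h) k) (a k))).
      - simpl. rewrite ha0. ring.
      - apply hf. lra. }
    assert (S2 : CS (fun k => Cmult (Cpow z (S k)) (a (S k))) (f z)).
    { apply (CS_unshift1 (fun k => Cmult (Cpow z k) (a k))).
      - simpl. rewrite ha0. ring.
      - apply hf. lra. }
    assert (S3 := CS_scal h _ _ HD).
    assert (S4 := CS_minus _ _ _ _ (CS_minus _ _ _ _ S1 S2) S3).
    apply (CS_ext _ (fun k => Cmult (a (S k)) (Ee z h k))) in S4.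
    2:{ intros k. unfold Ee. ring. }
    apply Rle_trans with (scal (Cmod h ^ 2 * (M / (r1 * rho))) SW).
    2:{ right. unfold K1. change (scal (Cmod h ^ 2 * (M / (r1 * rho))) SW) with ((Cmod h ^ 2 * (M / (r1 * rho))) * SW). ring. }
    apply (CS_norm_le _ _ _ _ S4 (is_series_scal_l (Cmod h ^ 2 * (M / (r1 * rho))) _ _ HSW')).
    intros k. rewrite Cmod_mult.
    assert (E1 := Ee_bound z h rho ltac:(lra) ltac:(lra) Hzh k).
    assert (h2 := Ha' k). assert (h3 := Cmod_ge_0 (a (S k))).
    assert (h5 : 0 <= rho ^ k) by (apply pow_le; lra).
    change (scal (Cmod h ^ 2 * (M / (r1 * rho))) (INR (S k) ^ 2 * q ^ k)) with ((Cmod h ^ 2 * (M / (r1 * rho))) * (INR (S k) ^ 2 * q ^ k)).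
    apply Rmult_le_reg_l with rho; [lra|].
    replace (rho * (Cmod (a (S k)) * Cmod (Ee z h k))) with (Cmod (a (S k)) * (rho * Cmod (Ee z h k))) by ring.
    eapply Rle_trans; [apply Rmult_le_compat_l; [exact h3|exact E1]|].
    replace (rho * (Cmod h ^ 2 * (M / (r1 * rho)) * (INR (S k) ^ 2 * q ^ k))) with ((INR (S k) ^ 2 * Cmod h ^ 2) * (M / r1 * q ^ k)) by (field; lra).
    replace (Cmod (a (S k)) * (INR (S k) ^ 2 * Cmod h ^ 2 * rho ^ k)) with ((INR (S k) ^ 2 * Cmod h ^ 2) * (Cmod (a (S k)) * rho ^ k)) by ring.
    apply Rmult_le_compat_l; [|exact h2].
    apply Rmult_le_pos; apply pow2_ge_0. }
  assert (Hsmall : forall eps, 0 < eps -> Cmod (Cminus (fp z) D) < eps).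
  { intros eps Heps.
    destruct (derive_eps f z (fp z) (hfp z hz) (eps/2) ltac:(lra)) as [del [Hdel Hd]].
    assert (HK := Rabs_pos K1).
    set (t := Rmin (del/2) (Rmin ((rho - Cmod z)/2) (eps / (2 * (Rabs K1 + 1))))).
    assert (Ht0 : 0 < t).
    { unfold t. repeat apply Rmin_pos; try lra. apply Rdiv_lt_0_compat; lra. }
    assert (Ht1 : t <= del / 2) by (unfold t; apply Rmin_l).
    assert (Ht2 : t <= (rho - Cmod z) / 2) by (unfold t; eapply Rle_trans; [apply Rmin_r|apply Rmin_l]).
    assert (Ht3 : t <= eps / (2 * (Rabs K1 + 1))) by (unfold t; eapply Rle_trans; [apply Rmin_r|apply Rmin_r]).
    assert (Hct : Cmod (RtoC t) = t) by (apply Cmod_RtoC_pos; lra).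
    specialize (Hd (RtoC t) ltac:(rewrite Hct; lra)).
    specialize (Hest (RtoC t) ltac:(rewrite Hct; lra)).
    rewrite Hct in Hd, Hest.
    assert (E : Cmult (RtoC t) (Cminus (fp z) D) =
      Cminus (Cminus (Cminus (f (Cplus z t)) (f z)) (Cmult t D)) (Cminus (Cminus (f (Cplus z t)) (f z)) (Cmult t (fp z)))) by ring.
    assert (T : Cmod (Cmult (RtoC t) (Cminus (fp z) D)) <= t ^ 2 * K1 + eps / 2 * t).
    { rewrite E. unfold Cminus at 1. eapply Rle_trans; [apply Cmod_triangle|]. rewrite Cmod_opp. lra. }
    rewrite Cmod_mult, Hct in T.
    assert (T2 : Cmod (Cminus (fp z) D) <= t * K1 + eps / 2).
    { apply Rmult_le_reg_l with t; [lra|]. nra. }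
    assert (T3 : t * K1 <= t * Rabs K1) by (apply Rmult_le_compat_l; [lra|apply Rle_abs]).
    assert (T4 : t * Rabs K1 <= eps / (2 * (Rabs K1 + 1)) * Rabs K1) by (apply Rmult_le_compat_r; lra).
    assert (T5 : eps / (2 * (Rabs K1 + 1)) * Rabs K1 < eps / 2).
    { apply Rmult_lt_reg_r with (2 * (Rabs K1 + 1)); [lra|].
      field_simplify; [|lra]. nra. }
    lra. }
  assert (H0 : Cmod (Cminus (fp z) D) = 0).
  { destruct (Rle_lt_or_eq_dec 0 _ (Cmod_ge_0 (Cminus (fp z) D))) as [h|h]; [|auto].
    specialize (Hsmall _ h). lra. }
  apply Cmod_eq_0 in H0.
  replace (fp z) with D; [exact HD|].
  replace (fp z) with (Cplus (Cminus (fp z) D) D) by ring. rewrite H0. ring.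
Qed.


Definition cis (t : R) : C := (cos t, sin t).

Lemma cis_pow t k : Cpow (cis t) k = cis (INR k * t).
Proof.
  induction k.
  - simpl. rewrite Rmult_0_l. unfold cis. rewrite cos_0, sin_0. reflexivity.
  - rewrite Cpow_S, IHk. unfold cis, Cmult. simpl fst. simpl snd.
    replace (INR (S k) * t) with (t + INR k * t) by (rewrite S_INR; ring).
    rewrite cos_plus, sin_plus. f_equal; ring.
Qed.

Lemma Cmod_cis t : Cmod (cis t) = 1.
Proof.
  unfold Cmod, cis. simpl fst. simpl snd.
  replace (cos t ^ 2 + sin t ^ 2) with 1. apply sqrt_1.
  rewrite <- (sin2_cos2 t). unfold Rsqr. ring.
Qed.

Lemma cis_period t k : cis (t + 2 * INR k * PI) = cis t.
Proof. unfold cis. rewrite cos_period, sin_period. reflexivity. Qed.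

Fixpoint csum (N : nat) (g : nat -> C) : C :=
  match N with O => RtoC 0 | S N' => Cplus (csum N' g) (g N') end.

Lemma geom_csum (q : C) N : Cmult (Cminus 1 q) (csum N (fun j => Cpow q j)) = Cminus 1 (Cpow q N).
Proof.
  induction N.
  - simpl. ring.
  - simpl csum. rewrite Cmult_plus_distr_l, IHN. simpl. ring.
Qed.

Lemma csum_const N : csum N (fun _ => RtoC 1) = RtoC (INR N).
Proof.
  induction N.
  - reflexivity.
  - simpl csum. rewrite IHN, S_INR, RtoC_plus. reflexivity.
Qed.

Lemma csum_ext N g g' : (forall j, (j < N)%nat -> g j = g' j) -> csum N g = csum N g'.
Proof.
  induction N; intros H; simpl; [reflexivity|].
  rewrite IHN by (intros; apply H; lia). rewrite H by lia. reflexivity.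
Qed.

Lemma csum_scal N x g : csum N (fun j => Cmult x (g j)) = Cmult x (csum N g).
Proof. induction N; simpl; [ring|]. rewrite IHN. ring. Qed.

Lemma csum_norm N g M : (forall j, (j < N)%nat -> Cmod (g j) <= M) -> Cmod (csum N g) <= INR N * M.
Proof.
  induction N; intros H; simpl csum.
  - rewrite Cmod_0. simpl. lra.
  - eapply Rle_trans; [apply Cmod_triangle|]. rewrite S_INR.
    assert (A := IHN ltac:(intros; apply H; lia)). assert (B := H N ltac:(lia)). lra.
Qed.

Lemma sum_n_zero_C n : @sum_n C_AbelianMonoid (fun _ => RtoC 0) n = RtoC 0.
Proof.
  induction n. rewrite sum_O. reflexivity.
  rewrite sum_Sn, IHn. change (Cplus (RtoC 0) (RtoC 0) = RtoC 0). ring.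
Qed.

Lemma CS_zero : CS (fun _ => RtoC 0) (RtoC 0).
Proof.
  apply CS_of_lim. intros eps Heps. exists 0%nat. intros n _.
  rewrite sum_n_zero_C. replace (Cminus (RtoC 0) (RtoC 0)) with (RtoC 0) by ring. rewrite Cmod_0. exact Heps.
Qed.

Lemma CS_csum N (u : nat -> nat -> C) (l : nat -> C) :
  (forall j, (j < N)%nat -> CS (u j) (l j)) -> CS (fun k => csum N (fun j => u j k)) (csum N l).
Proof.
  induction N; intros H; simpl csum.
  - exact CS_zero.
  - apply CS_plus. apply IHN. intros; apply H; lia. apply H; lia.
Qed.

Lemma sum_n_single m (x : C) n :
  @sum_n C_AbelianMonoid (fun k => if Nat.eqb k m then x else RtoC 0) n = if Nat.leb m n then x else RtoC 0.
Proof.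
  induction n.
  - rewrite sum_O. destruct m; reflexivity.
  - rewrite sum_Sn, IHn. change (plus ?a ?b) with (Cplus a b).
    destruct (Nat.leb_spec m n), (Nat.eqb_spec (S n) m), (Nat.leb_spec m (S n)); try lia; first [apply Cplus_0_r | apply Cplus_0_l].
Qed.

Lemma CS_single m (x : C) : CS (fun k => if Nat.eqb k m then x else RtoC 0) x.
Proof.
  apply CS_of_lim. intros eps Heps. exists m. intros n Hn.
  rewrite sum_n_single. destruct (Nat.leb_spec m n); [|lia].
  replace (Cminus x x) with (RtoC 0) by ring. rewrite Cmod_0. exact Heps.
Qed.

Lemma cis_ne_1 x : 0 < x < 2 * PI -> cis x <> RtoC 1.
Proof.
  intros Hx Heq. unfold cis, RtoC in Heq. injection Heq as Hc Hs.
  destruct (Rtotal_order x PI) as [h|[h|h]].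
  - assert (sin x > 0) by (apply sin_gt_0; lra). lra.
  - subst. rewrite cos_PI in Hc. lra.
  - assert (sin x < 0) by (apply sin_lt_0; lra). lra.
Qed.

Definition omega (N : nat) : C := cis (2 * PI / INR N).

Lemma roots_sum N e : (0 < N)%nat ->
  csum N (fun j => Cpow (Cpow (omega N) e) j) = if Nat.eqb (e mod N) 0 then RtoC (INR N) else RtoC 0.
Proof.
  intros HN.
  assert (HNr : 0 < INR N) by (apply lt_0_INR; lia).
  assert (Hdm := Nat.div_mod_eq e N).
  set (s := (e mod N)%nat) in *. set (t := (e / N)%nat) in *.
  assert (Hs : (s < N)%nat) by (apply Nat.mod_upper_bound; lia).
  assert (Hw : Cpow (omega N) e = cis (INR s * (2 * PI / INR N))).
  { unfold omega. rewrite cis_pow. rewrite Hdm, plus_INR, mult_INR.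
    replace ((INR N * INR t + INR s) * (2 * PI / INR N)) with (INR s * (2 * PI / INR N) + 2 * INR t * PI) by (field; lra).
    apply cis_period. }
  rewrite Hw.
  destruct (Nat.eqb_spec s 0) as [Hs0|Hs0].
  - rewrite Hs0. simpl INR. rewrite Rmult_0_l.
    replace (cis 0) with (RtoC 1) by (unfold cis; rewrite cos_0, sin_0; reflexivity).
    rewrite (csum_ext N _ (fun _ => RtoC 1)) by (intros; apply Cpow_1_l).
    apply csum_const.
  - set (q := cis (INR s * (2 * PI / INR N))).
    assert (Hq1 : q <> RtoC 1).
    { apply cis_ne_1. assert (0 < INR s) by (apply lt_0_INR; lia).
      assert (INR s < INR N) by (apply lt_INR; lia). assert (PI > 0) by apply PI_RGT_0.
      split.
      - apply Rmult_lt_0_compat; [lra|]. apply Rdiv_lt_0_compat; lra.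
      - apply Rmult_lt_reg_r with (INR N); [lra|]. field_simplify; [|lra]. nra. }
    assert (HqN : Cpow q N = RtoC 1).
    { unfold q. rewrite cis_pow.
      replace (INR N * (INR s * (2 * PI / INR N))) with (0 + 2 * INR s * PI) by (field; lra).
      rewrite cis_period. unfold cis. rewrite cos_0, sin_0. reflexivity. }
    assert (G := geom_csum q N). rewrite HqN in G.
    replace (Cminus (RtoC 1) (RtoC 1)) with (RtoC 0) in G by ring.
    assert (Hne : Cminus (RtoC 1) q <> RtoC 0).
    { intros E. apply Hq1. replace q with (Cminus (RtoC 1) (Cminus (RtoC 1) q)) by ring. rewrite E. ring. }
    replace (csum N (fun j => Cpow q j)) with (Cmult (Cinv (Cminus (RtoC 1) q)) (Cmult (Cminus (RtoC 1) q) (csum N (fun j => Cpow q j)))).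
    + rewrite G. ring.
    + rewrite Cmult_assoc, Cinv_l by exact Hne. ring.
Qed.


Lemma bernoulli (eta : R) : 0 <= eta <= 1 -> forall m, 1 - INR m * eta <= (1 - eta) ^ m.
Proof.
  intros He m. induction m.
  - simpl. lra.
  - rewrite S_INR. simpl.
    assert (0 <= INR m) by apply pos_INR.
    assert ((1 - eta) * (1 - INR m * eta) <= (1 - eta) * (1 - eta) ^ m) by (apply Rmult_le_compat_l; lra).
    nra.
Qed.

Lemma cauchy_radius (b : nat -> C) (P : C -> C) (M : R)
  (hs : forall w, Cmod w < 1 -> CS (fun k => Cmult (Cpow w k) (b k)) (P w))
  (hb : forall w, Cmod w < 1 -> Cmod (P w) <= M) m rho (Hrho : 0 < rho < 1) :
  rho ^ m * Cmod (b m) <= M.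
Proof.
  set (r1 := (1 + rho) / 2).
  destruct (CS_bounded _ _ (hs (RtoC r1) ltac:(rewrite Cmod_RtoC_pos; unfold r1; lra))) as [C0 HC0].
  assert (Hb : forall k, Cmod (b k) * r1 ^ k <= C0).
  { intros k. specialize (HC0 k). rewrite Cmod_mult, Cmod_pow, Cmod_RtoC_pos in HC0 by (unfold r1; lra). lra. }
  assert (HC0p : 0 <= C0) by (eapply Rle_trans; [apply Cmod_ge_0|apply (HC0 0%nat)]).
  set (q := rho / r1).
  assert (Hq : 0 < q < 1).
  { unfold q, r1. split. apply Rdiv_lt_0_compat; lra. apply Rmult_lt_reg_r with ((1 + rho)/2); [lra|]. field_simplify; lra. }
  assert (Hb' : forall k, Cmod (b k) * rho ^ k <= C0 * q ^ k).
  { intros k. replace rho with (q * r1) by (unfold q, r1; field; lra).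
    rewrite Rpow_mult_distr. specialize (Hb k).
    replace (Cmod (b k) * (q ^ k * r1 ^ k)) with (q ^ k * (Cmod (b k) * r1 ^ k)) by ring.
    rewrite (Rmult_comm C0). apply Rmult_le_compat_l; [apply pow_le; lra|exact Hb]. }
  set (s := sqrt q).
  assert (Hs : 0 < s < 1).
  { unfold s. split. apply sqrt_lt_R0; lra. rewrite <- sqrt_1. apply sqrt_lt_1; lra. }
  assert (Hss : s * s = q) by (unfold s; apply sqrt_sqrt; lra).
  assert (Hclaim : forall N, (m < N)%nat -> rho ^ m * Cmod (b m) <= M + C0 * s ^ N / (1 - s)).
  { intros N HN.
    assert (HN0 : (0 < N)%nat) by lia.
    assert (HNr : 0 < INR N) by (apply lt_0_INR; lia).
    set (om := omega N).
    assert (Hom : forall j, Cmod (Cpow om j) = 1).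
    { intros j. unfold om, omega. rewrite cis_pow. apply Cmod_cis. }
    set (w := fun j => Cmult (RtoC rho) (Cpow om j)).
    assert (Hw : forall j, Cmod (w j) = rho).
    { intros j. unfold w. rewrite Cmod_mult, Hom, Cmod_RtoC_pos by lra. ring. }
    set (Ssum := csum N (fun j => Cmult (Cpow (Cpow om j) (N - m)) (P (w j)))).
    assert (HS : CS (fun k => csum N (fun j => Cmult (Cpow (Cpow om j) (N - m)) (Cmult (Cpow (w j) k) (b k)))) Ssum).
    { apply CS_csum. intros j _. apply CS_scal. apply hs. rewrite Hw. lra. }
    assert (HSb : Cmod Ssum <= INR N * M).
    { apply csum_norm. intros j _. rewrite Cmod_mult, Cmod_pow, Hom, pow1, Rmult_1_l. apply hb. rewrite Hw. lra. }
    set (G := fun e => if Nat.eqb (e mod N) 0 then RtoC (INR N) else RtoC 0).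
    assert (HG : forall e, Cmod (G e) <= INR N).
    { intros e. unfold G. destruct (Nat.eqb _ 0). rewrite Cmod_RtoC_pos; lra. rewrite Cmod_0; lra. }
    set (c := fun k => Cmult (Cmult (Cpow (RtoC rho) k) (b k)) (G (N - m + k)%nat)).
    assert (Hc : CS c Ssum).
    { apply (CS_ext _ c) in HS; [exact HS|]. intros k. unfold c, G.
      rewrite <- (roots_sum N (N - m + k)) by exact HN0.
      rewrite <- csum_scal. apply csum_ext. intros j _. unfold w.
      rewrite Cpow_mult_l, <- !Cpow_mult_r.
      replace ((N - m + k) * j)%nat with (j * (N - m) + j * k)%nat by nia.
      rewrite Cpow_add_r. unfold om. ring. }
    set (c1 := fun k => if Nat.eqb k m then Cmult (Cmult (Cpow (RtoC rho) m) (b m)) (RtoC (INR N)) else RtoC 0).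
    assert (Hc1 : CS c1 (Cmult (Cmult (Cpow (RtoC rho) m) (b m)) (RtoC (INR N)))) by apply CS_single.
    assert (Hc2 := CS_minus _ _ _ _ Hc Hc1).
    set (bnd := INR N * C0 * s ^ N).
    assert (Hgeo : is_series (fun k => bnd * s ^ k) (bnd * / (1 - s))).
    { apply (is_series_scal_l (K:=R_AbsRing) (V:=R_NormedModule) bnd). apply is_series_geom. rewrite Rabs_pos_eq; lra. }
    assert (Hbound : forall k, Cmod (Cminus (c k) (c1 k)) <= bnd * s ^ k).
    { intros k.
      assert (Hbn : 0 <= bnd * s ^ k) by (unfold bnd; repeat apply Rmult_le_pos; try apply pow_le; lra).
      destruct (Nat.ltb_spec k (m + N)) as [Hk|Hk].
      -
        replace (Cminus (c k) (c1 k)) with (RtoC 0). rewrite Cmod_0; exact Hbn.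
        unfold c, c1, G. destruct (Nat.eqb_spec k m) as [->|Hkm].
        + replace (N - m + m)%nat with N by lia. rewrite Nat.mod_same by lia. simpl. ring.
        + destruct (Nat.eqb_spec ((N - m + k) mod N) 0) as [Hmod|Hmod]; [|ring].
          exfalso. destruct (Nat.lt_ge_cases k m) as [Hkm'|Hkm'].
          * rewrite Nat.mod_small in Hmod by lia. lia.
          * assert (E : ((N - m + k) mod N = k - m)%nat).
            { symmetry. apply Nat.mod_unique with 1%nat; lia. }
            lia.
      - unfold c1. destruct (Nat.eqb_spec k m) as [Hkm|Hkm]; [lia|].
        replace (Cminus (c k) (RtoC 0)) with (c k) by ring.
        unfold c. rewrite !Cmod_mult, Cmod_pow, Cmod_RtoC_pos by lra.
        assert (h1 := Hb' k). assert (h2 := HG (N - m + k)%nat).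
        assert (h3 : q ^ k <= s ^ N * s ^ k).
        { rewrite <- Hss, Rpow_mult_distr. apply Rmult_le_compat_r; [apply pow_le; lra|].
          replace k with (N + (k - N))%nat by lia. rewrite pow_add.
          assert (s ^ (k - N) <= 1).
          { rewrite <- (pow1 (k - N)). apply pow_incr. lra. }
          assert (0 <= s ^ N) by (apply pow_le; lra). nra. }
        assert (h4 : 0 <= rho ^ k) by (apply pow_le; lra).
        assert (h5 := Cmod_ge_0 (b k)). assert (h6 := Cmod_ge_0 (G (N - m + k)%nat)).
        unfold bnd.
        replace (INR N * C0 * s ^ N * s ^ k) with ((C0 * (s ^ N * s ^ k)) * INR N) by ring.
        apply Rmult_le_compat; try lra.
        + apply Rmult_le_pos; lra.
        + eapply Rle_trans; [|apply Rmult_le_compat_l; [exact HC0p|exact h3]]. lra. }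
    assert (Hn := CS_norm_le _ _ _ _ Hc2 Hgeo Hbound).
    set (X := Cmult (Cmult (Cpow (RtoC rho) m) (b m)) (RtoC (INR N))) in *.
    assert (HX : Cmod X = rho ^ m * Cmod (b m) * INR N).
    { unfold X. rewrite !Cmod_mult, Cmod_pow, !Cmod_RtoC_pos; lra. }
    assert (HX2 : Cmod X <= Cmod Ssum + Cmod (Cminus Ssum X)).
    { replace X with (Cplus Ssum (Copp (Cminus Ssum X))) at 1 by ring.
      eapply Rle_trans; [apply Cmod_triangle|]. rewrite Cmod_opp. lra. }
    rewrite HX in HX2.
    assert (E : rho ^ m * Cmod (b m) * INR N <= (M + C0 * s ^ N / (1 - s)) * INR N).
    { unfold bnd in Hn. replace ((M + C0 * s ^ N / (1 - s)) * INR N) with (INR N * M + INR N * C0 * s ^ N * / (1 - s)) by (field; lra). lra. }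
    apply Rmult_le_reg_r in E; [exact E|exact HNr]. }
  destruct (Rle_or_lt (rho ^ m * Cmod (b m)) M) as [h|h]; [exact h|exfalso].
  set (eps := (rho ^ m * Cmod (b m) - M) / 2).
  assert (Heps : 0 < eps) by (unfold eps; lra).
  destruct (pow_lt_1_zero s ltac:(rewrite Rabs_pos_eq; lra) (eps * (1 - s) / (C0 + 1)) ltac:(apply Rdiv_lt_0_compat; [apply Rmult_lt_0_compat|]; lra)) as [N1 HN1].
  set (N := Nat.max N1 (S m)).
  specialize (Hclaim N ltac:(unfold N; lia)).
  specialize (HN1 N ltac:(unfold N; lia)).
  rewrite Rabs_pos_eq in HN1 by (apply pow_le; lra).
  assert (HsN : 0 <= s ^ N) by (apply pow_le; lra).
  assert (T : C0 * s ^ N < eps * (1 - s)).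
  { apply Rle_lt_trans with ((C0 + 1) * s ^ N); [nra|].
    apply Rmult_lt_reg_r with (/ (C0 + 1)). apply Rinv_0_lt_compat; lra.
    replace ((C0 + 1) * s ^ N * / (C0 + 1)) with (s ^ N) by (field; lra).
    unfold Rdiv in HN1. lra. }
  assert (T2 : C0 * s ^ N / (1 - s) < eps).
  { apply Rmult_lt_reg_r with (1 - s); [lra|]. unfold Rdiv. rewrite Rmult_assoc, Rinv_l by lra. lra. }
  unfold eps in *. lra.
Qed.

Lemma cauchy_est (b : nat -> C) (P : C -> C) (M : R)
  (hs : forall w, Cmod w < 1 -> CS (fun k => Cmult (Cpow w k) (b k)) (P w))
  (hb : forall w, Cmod w < 1 -> Cmod (P w) <= M) m : Cmod (b m) <= M.
Proof.
  assert (HM : 0 <= M) by (eapply Rle_trans; [apply Cmod_ge_0|apply (hb (RtoC 0)); rewrite Cmod_0; lra]).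
  destruct (Rle_or_lt (Cmod (b m)) M) as [h|h]; [exact h|exfalso].
  destruct m as [|m'].
  - assert (H := cauchy_radius b P M hs hb 0 (1/2) ltac:(lra)). simpl in H. lra.
  - set (m := S m') in *.
    assert (Hm : 1 <= INR m) by (unfold m; rewrite S_INR; assert (0 <= INR m') by apply pos_INR; lra).
    set (B := Cmod (b m)) in *.
    set (eta := (1 - M / B) / (2 * INR m)).
    assert (HB : 0 < B) by lra.
    assert (HMB : 0 <= M / B < 1).
    { split. apply Rmult_le_pos; [lra|apply Rlt_le, Rinv_0_lt_compat; lra].
      apply Rmult_lt_reg_r with B; [lra|]. unfold Rdiv. rewrite Rmult_assoc, Rinv_l by lra. lra. }
    assert (Heta : 0 < eta <= 1/2).
    { unfold eta. split. apply Rdiv_lt_0_compat; lra.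
      apply Rmult_le_reg_r with (2 * INR m); [lra|]. unfold Rdiv. rewrite Rmult_assoc, Rinv_l by lra. nra. }
    assert (H := cauchy_radius b P M hs hb m (1 - eta) ltac:(lra)).
    assert (Hbe := bernoulli eta ltac:(lra) m).
    assert (E1 : INR m * eta = (1 - M / B) / 2) by (unfold eta; field; lra).
    assert (E2 : (1 - (1 - M / B) / 2) * B <= (1 - eta) ^ m * B) by (apply Rmult_le_compat_r; lra).
    assert (E3 : (1 - (1 - M / B) / 2) * B = (B + M) / 2) by (field; lra).
    fold B in H. lra.
Qed.


Lemma RPS (al : nat -> R) t l : is_series (fun k => t ^ k * al k) l -> is_pseries al t l.
Proof.
  intros H. unfold is_pseries. eapply is_series_ext; [|exact H].
  intros k. rewrite pow_n_pow. reflexivity.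
Qed.

Lemma stepC (a : nat -> C) (f fp phi : C -> C) (ha0 : a 0%nat = RtoC 0) (ha1 : a 1%nat = RtoC 1)
 (hf' : forall w, Cmod w < 1 -> CS (fun k => Cmult (Cpow w k) (a k)) (f w))
 (hp : forall w, Cmod w < 1 -> CS (fun k => Cmult (Cpow w k) (Cmult (RtoC (INR k - 1)) (a k))) (Cminus (Cmult w (fp w)) (f w)))
 (hphi_bd : forall z : C, Cmod z < 1 -> Cmod (phi z) <= 1)
 (heq : forall z : C, Cmod z < 1 ->
     Cminus (Cmult z (fp z)) (f z)
     = Cmult (RtoC (/ 2)) (Cmult (Cpow z 2) (phi z)))
 (hcoef : forall k, (1 <= k)%nat -> Cmod (a k) <= 1)
 (ha2 : Cmod (a 2%nat) <= 1/2)
 z (hz : Cmod z < 1) (hz0 : z <> RtoC 0) : Cmod (Cminus (f z) z) <= Cmod z ^ 2 / 2.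
Proof.
  assert (Hzp : 0 < Cmod z) by (apply Cmod_gt_0; exact hz0).
  set (H := Cdiv (f z) z).
  assert (hh : CS (fun k => Cmult (Cpow z k) (a (S k))) H).
  { assert (S1 : CS (fun k => Cmult (Cpow z (S k)) (a (S k))) (f z)).
    { apply (CS_unshift1 (fun k => Cmult (Cpow z k) (a k))); [simpl; rewrite ha0; ring|apply hf'; exact hz]. }
    apply (CS_scal (Cinv z)) in S1. replace H with (Cmult (Cinv z) (f z)) by (unfold H, Cdiv; ring). eapply CS_ext; [|exact S1].
    intros k. simpl. field. exact hz0. }
  set (u := Cminus H (RtoC 1)).
  assert (Hfz : Cminus (f z) z = Cmult z u).
  { unfold u, H, Cdiv. field. exact hz0. }
  rewrite Hfz, Cmod_mult.
  destruct (Ceq_dec u (RtoC 0)) as [Hu|Hu].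
  { rewrite Hu, Cmod_0. nra. }
  assert (Hup : 0 < Cmod u) by (apply Cmod_gt_0; exact Hu).
  set (c := Cmult (RtoC (/ Cmod u)) (Cconj u)).
  assert (Hc : Cmod c = 1).
  { unfold c. rewrite Cmod_mult, Cmod_conj, Cmod_R, Rabs_pos_eq. field; lra. apply Rlt_le, Rinv_0_lt_compat; lra. }
  assert (Hcu : Re (Cmult c u) = Cmod u).
  { unfold c. rewrite <- Cmult_assoc, (Cmult_comm (Cconj u)), <- Cmod2_conj, <- RtoC_mult.
    simpl. field. lra. }
  set (al := fun k => Re (Cmult c (Cmult (Cpow z k) (a (S k))))).
  assert (G1 : PSeries al 1 = Re (Cmult c H)).
  { apply is_pseries_unique. apply RPS. eapply is_series_ext; [|apply (CS_Re _ _ (CS_scal c _ _ hh))].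
    intros k. unfold al. rewrite pow1, Rmult_1_l. reflexivity. }
  assert (G0 : PSeries al 0 = Re c).
  { rewrite PSeries_0. unfold al. change (Cpow z 0) with (RtoC 1). rewrite ha1. f_equal. ring. }
  assert (Hder : forall t, 0 < t <= 1 -> is_pseries (PS_derive al) t (Re (Cmult c (Cmult z (Cmult (RtoC (/2)) (phi (Cmult (RtoC t) z))))))).
  { intros t Ht.
    set (w := Cmult (RtoC t) z).
    assert (Hw : Cmod w < 1).
    { unfold w. rewrite Cmod_mult, Cmod_RtoC_pos by lra. nra. }
    assert (Hw0 : w <> RtoC 0).
    { unfold w. apply Cmult_neq_0; [|exact hz0]. intros E. apply RtoC_inj in E. lra. }
    assert (S1 := hp w Hw). rewrite heq in S1 by exact Hw.
    apply (CS_unshift1 (fun k => Cmult (Cpow w k) (Cmult (RtoC (INR k - 1)) (a k)))) in S1.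
    2:{ simpl. rewrite ha0. ring. }
    apply (CS_unshift1 (fun k => Cmult (Cpow w (S k)) (Cmult (RtoC (INR (S k) - 1)) (a (S k))))) in S1.
    2:{ simpl. replace (1 - 1) with 0 by ring. ring. }
    apply (CS_scal (Cmult c (Cmult z (Cinv (Cpow w 2))))) in S1.
    apply CS_Re in S1. apply RPS.
    replace (Re (Cmult c (Cmult z (Cmult (RtoC (/ 2)) (phi w)))))
      with (Re (Cmult (Cmult c (Cmult z (Cinv (Cpow w 2)))) (Cmult (RtoC (/ 2)) (Cmult (Cpow w 2) (phi w))))).
    2:{ f_equal. field. exact Hw0. }
    eapply is_series_ext; [|exact S1].
    intros k. unfold PS_derive, al.
    rewrite <- re_scal_l, <- re_scal_l. f_equal.
    unfold w. rewrite !Cpow_mult_l, !RtoC_pow.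
    replace (INR (S (S k)) - 1) with (INR (S k)) by (rewrite (S_INR (S k)); ring).
    assert (Ht0 : RtoC t <> RtoC 0) by (intros E; apply RtoC_inj in E; lra).
    simpl. field. split; assumption. }
  assert (Hrad : forall t, 0 <= t <= 1 -> Rbar_lt (Rabs t) (CV_radius al)).
  { intros t Ht.
    destruct (CV_radius_bounded al) as [Hub _].
    assert (Hin : Rbar_le (/ Cmod z) (CV_radius al)).
    { apply Hub. exists 1. intros n. unfold al.
      eapply Rle_trans; [rewrite Rabs_mult; apply Rmult_le_compat_r; [apply Rabs_pos|apply re_le_Cmod]|].
      rewrite !Cmod_mult, Hc, Cmod_pow, Rabs_pos_eq by (apply pow_le; apply Rlt_le, Rinv_0_lt_compat; lra).
      rewrite <- Rinv_pow by lra.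
      assert (hz2 : 0 < Cmod z ^ n) by (apply pow_lt; lra).
      assert (ha := hcoef (S n) ltac:(lia)).
      replace (1 * (Cmod z ^ n * Cmod (a (S n))) * / Cmod z ^ n) with (Cmod (a (S n))) by (field; lra).
      exact ha. }
    assert (Hlt : 1 < / Cmod z).
    { rewrite <- Rinv_1. apply Rinv_lt_contravar; lra. }
    rewrite Rabs_pos_eq by lra.
    destruct (CV_radius al) as [r| |]; simpl in *; try lra; auto. }
  destruct (MVT_gen (PSeries al) 0 1 (PSeries (PS_derive al))) as [t0 [Ht0 HMVT]].
  { rewrite Rmin_left, Rmax_right by lra. intros x Hx. apply is_derive_PSeries. apply Hrad. lra. }
  { rewrite Rmin_left, Rmax_right by lra. intros x Hx. apply PSeries_continuity. apply Hrad. lra. }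
  rewrite Rmin_left, Rmax_right in Ht0 by lra.
  rewrite G1, G0 in HMVT.
  assert (Hu2 : Cmod u = Re (Cmult c H) - Re c).
  { rewrite <- Hcu. unfold u. replace (Cmult c (Cminus H (RtoC 1))) with (Cminus (Cmult c H) c) by ring.
    destruct (Cmult c H), c. unfold Cminus, Cplus, Copp, Re. simpl. ring. }
  assert (Hdf : Rabs (PSeries (PS_derive al) t0) <= Cmod z / 2).
  { destruct (Rle_lt_or_eq_dec 0 t0 (proj1 Ht0)) as [Hp|Hp].
    - rewrite (is_pseries_unique _ _ _ (Hder t0 ltac:(lra))).
      eapply Rle_trans; [apply re_le_Cmod|].
      rewrite !Cmod_mult, Hc, Cmod_RtoC_pos by lra.
      assert (Hw : Cmod (Cmult (RtoC t0) z) < 1) by (rewrite Cmod_mult, Cmod_RtoC_pos by lra; nra).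
      assert (hph := hphi_bd _ Hw). assert (0 <= Cmod (phi (Cmult (RtoC t0) z))) by apply Cmod_ge_0.
      nra.
    - subst t0. rewrite PSeries_0. unfold PS_derive, al. change (INR 1) with 1. rewrite Rmult_1_l.
      eapply Rle_trans; [apply re_le_Cmod|].
      rewrite !Cmod_mult, Hc, Cpow_1_r.
      assert (0 <= Cmod (a 2%nat)) by apply Cmod_ge_0. nra. }
  assert (Hd2 : PSeries (PS_derive al) t0 <= Cmod z / 2) by (eapply Rle_trans; [apply Rle_abs|exact Hdf]).
  assert (Hu3 : Cmod u <= Cmod z / 2) by (rewrite Hu2, HMVT; lra).
  nra.
Qed.


Lemma ln_le_x x : 0 <= x -> ln (1 + x) <= x.
Proof.
  intros Hx. destruct (Req_dec x 0) as [->|Hne].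
  - rewrite Rplus_0_r, ln_1. lra.
  - assert (H := exp_ineq1 x Hne). rewrite <- (ln_exp x) at 2. apply ln_le; lra.
Qed.

Lemma harmonic_ge_ln m : ln (INR (S (S m))) <= harmonic (S m).
Proof.
  unfold harmonic. simpl pred. induction m.
  - simpl. replace (1 + 1) with (1 + 1) by ring. assert (H := ln_le_x 1 ltac:(lra)).
    replace (INR 2) with (1 + 1) by (simpl; ring). simpl INR. rewrite Rinv_1. exact H.
  - rewrite tech5. 
    replace (INR (S (S (S m)))) with (INR (S (S m)) * (1 + / INR (S (S m)))).
    2:{ rewrite (S_INR (S (S m))). field. apply not_0_INR. lia. }
    assert (HP : 0 < INR (S (S m))) by (apply lt_0_INR; lia).
    rewrite ln_mult; [|lra|]. 2:{ assert (0 < / INR (S (S m))) by (apply Rinv_0_lt_compat; lra). lra. }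
    assert (H := ln_le_x (/ INR (S (S m))) ltac:(apply Rlt_le, Rinv_0_lt_compat; lra)).
    lra.
Qed.

Lemma gamma_nonneg : 0 <= euler_gamma.
Proof.
  unfold euler_gamma.
  assert (H : Rbar_le (Lim_seq (fun _ => 0)) (Lim_seq (fun n => harmonic n - ln (INR n)))).
  { apply Lim_seq_le_loc. exists 1%nat. intros n Hn.
    destruct n as [|m]; [lia|].
    assert (H1 := harmonic_ge_ln m).
    assert (H2 : ln (INR (S m)) <= ln (INR (S (S m)))).
    { apply ln_le. apply lt_0_INR; lia. apply le_INR; lia. }
    lra. }
  rewrite Lim_seq_const in H.
  destruct (Lim_seq (fun n => harmonic n - ln (INR n))) as [l| |]; simpl in *; lra.
Qed.

Lemma final_ineq (r w : R) (n : nat) (hr : 0 < r < 1) (hw : 0 <= w < r) (hn : (2 <= n)%nat) (G : R) :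
  let K := (INR n + 1) / (2 * INR n) in
  G <= 1 / (1 - w) * (1 / (1 - w)) ->
  K * w ^ n * G <= w ^ n * (K + B_const r n * (w / (r - w))).
Proof.
  intros K HG.
  assert (Hn : 2 <= INR n) by (replace 2 with (INR 2) by (simpl; ring); apply le_INR; exact hn).
  assert (HK : 0 < K <= (INR n + 1) / 4).
  { unfold K. split. apply Rdiv_lt_0_compat; lra.
    unfold Rdiv. apply Rmult_le_compat_l; [lra|]. apply Rinv_le_contravar; lra. }
  set (B0 := (INR n + 1) / (2 * (1 - r))).
  assert (HB : B0 <= B_const r n).
  { unfold B_const, B0.
    assert (Hl : 0 <= ln (INR n - 1)) by (rewrite <- ln_1; apply ln_le; lra).
    assert (Hg := gamma_nonneg).
    set (S := sqrt (2 * r - r ^ 2)).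
    assert (HS : r <= S).
    { unfold S. rewrite <- (sqrt_pow2 r) at 1 by lra. apply sqrt_le_1_alt. nra. }
    assert (Hrn : 0 < r ^ n <= r).
    { split. apply pow_lt; lra. destruct n as [|n']; [lia|]. simpl.
      assert (r ^ n' <= 1) by (rewrite <- (pow1 n'); apply pow_incr; lra). nra. }
    assert (H1 : 1 <= S / r ^ n).
    { apply Rmult_le_reg_r with (r ^ n); [lra|]. unfold Rdiv. rewrite Rmult_assoc, Rinv_l by lra. lra. }
    replace (S / (2 * (1 - r) * r ^ n) * (INR n + 1 + ln (INR n - 1) + euler_gamma))
      with ((S / r ^ n) * ((INR n + 1 + ln (INR n - 1) + euler_gamma) / (2 * (1 - r)))) by (field; lra).
    assert (H2 : (INR n + 1) / (2 * (1 - r)) <= (INR n + 1 + ln (INR n - 1) + euler_gamma) / (2 * (1 - r))).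
    { apply Rmult_le_compat_r. apply Rlt_le, Rinv_0_lt_compat; lra. lra. }
    assert (0 < (INR n + 1) / (2 * (1 - r))) by (apply Rdiv_lt_0_compat; lra).
    nra. }
  assert (Hwn : 0 <= w ^ n) by (apply pow_le; lra).
  assert (Hq : 0 <= w / (r - w)) by (apply Rdiv_le_0_compat; lra).
  assert (Hmain : K * (1 / (1 - w) * (1 / (1 - w))) <= K + B0 * (w / (r - w))).
  { assert (Haux : (2 - w) * (r - w) * (1 - r) <= (1 - w) ^ 2 / 2).
    { set (u := 1 - w). set (d := 1 - r).
      replace (2 - w) with (1 + u) by (unfold u; ring). replace (r - w) with (u - d) by (unfold u, d; ring).
      assert (Hd : 0 < d) by (unfold d; lra). assert (Hud : d < u <= 1) by (unfold u, d; lra).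
      assert (A1 : (u - d) * d <= u ^ 2 / 4) by (assert (0 <= (u - 2 * d) ^ 2) by apply pow2_ge_0; nra).
      assert (A2 : 0 <= (u - d) * d) by nra.
      nra. }
    assert (Hw1 : 0 < 1 - w) by lra. assert (Hrw : 0 < r - w) by lra.
    assert (Hx : (2 - w) * (r - w) <= (1 - w) ^ 2 / (2 * (1 - r))).
    { apply Rmult_le_reg_r with (1 - r); [lra|].
      replace ((1 - w) ^ 2 / (2 * (1 - r)) * (1 - r)) with ((1 - w) ^ 2 / 2) by (field; lra). lra. }
    assert (Hx0 : 0 <= (2 - w) * (r - w)) by nra.
    set (P := K * (2 - w) * (r - w)).
    assert (HP : P <= B0 * (1 - w) ^ 2).
    { unfold P. rewrite Rmult_assoc.
      apply Rle_trans with ((INR n + 1) / 4 * ((1 - w) ^ 2 / (2 * (1 - r)))).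
      { apply Rmult_le_compat; lra. }
      unfold B0. replace ((INR n + 1) / 4 * ((1 - w) ^ 2 / (2 * (1 - r)))) with ((INR n + 1) / (2 * (1 - r)) * (1 - w) ^ 2 * / 4) by (field; lra).
      assert (0 <= (INR n + 1) / (2 * (1 - r)) * (1 - w) ^ 2).
      { apply Rmult_le_pos. apply Rlt_le, Rdiv_lt_0_compat; lra. apply pow2_ge_0. }
      lra. }
    replace (K * (1 / (1 - w) * (1 / (1 - w)))) with (K + P * (w / ((1 - w) ^ 2 * (r - w)))) by (unfold P; field; lra).
    replace (B0 * (w / (r - w))) with (B0 * (1 - w) ^ 2 * (w / ((1 - w) ^ 2 * (r - w)))) by (field; lra).
    apply Rplus_le_compat_l. apply Rmult_le_compat_r; [|exact HP].
    apply Rdiv_le_0_compat; [lra|]. apply Rmult_lt_0_compat; [apply pow_lt|]; lra. }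
  assert (Hmain2 : K * G <= K + B_const r n * (w / (r - w))).
  { eapply Rle_trans; [apply Rmult_le_compat_l; [lra|exact HG]|].
    eapply Rle_trans; [exact Hmain|]. apply Rplus_le_compat_l. apply Rmult_le_compat_r; lra. }
  replace (K * w ^ n * G) with (w ^ n * (K * G)) by ring.
  apply Rmult_le_compat_l; lra.
Qed.


Theorem theorem3p2
  (a : nat -> C) (f fp phi : C -> C)
  (ha0 : a 0%nat = RtoC 0) (ha1 : a 1%nat = RtoC 1)
  (hf : forall z : C, Cmod z < 1 -> is_pseries a z (f z))
  (hfp : forall z : C, Cmod z < 1 -> is_derive f z (fp z))
  (hphi_an : forall z : C, Cmod z < 1 -> ex_derive phi z)
  (hphi_bd : forall z : C, Cmod z < 1 -> Cmod (phi z) <= 1)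
  (heq : forall z : C, Cmod z < 1 ->
     Cminus (Cmult z (fp z)) (f z)
     = Cmult (RtoC (/ 2)) (Cmult (Cpow z 2) (phi z)))
  (r : R) (hr : 0 < r < 1) (n : nat) (hn : (2 <= n)%nat)
  (z : C) (hz : Cmod z < r) :
  Cmod (Cminus (Cdiv (sn_deriv a n z) (fp z)) (RtoC 1))
  <= Cmod z ^ n * ((INR n + 1) / (2 * INR n)
                   + B_const r n * (Cmod z / (r - Cmod z))).
Proof.
  assert (hf' : forall w, Cmod w < 1 -> CS (fun k => Cmult (Cpow w k) (a k)) (f w)).
  { intros w Hw. eapply CS_ext; [|exact (hf w Hw)]. intros k. cbv beta. rewrite pow_n_C. reflexivity. }
  assert (hA := termwise a f fp ha0 hf' hfp).
  assert (hp : forall w, Cmod w < 1 -> CS (fun k => Cmult (Cpow w k) (Cmult (RtoC (INR k - 1)) (a k))) (Cminus (Cmult w (fp w)) (f w))).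
  { intros w Hw.
    assert (S1 := CS_scal w _ _ (hA w Hw)).
    assert (S2 : CS (fun k => Cmult (Cpow w k) (Cmult (RtoC (INR k)) (a k))) (Cmult w (fp w))).
    { apply CS_shift1. { rewrite ha0. ring. }
      eapply CS_ext; [|exact S1]. intros k. rewrite Cpow_S. ring. }
    eapply CS_ext; [|exact (CS_minus _ _ _ _ S2 (hf' w Hw))].
    intros k. rewrite RtoC_minus. ring. }
  assert (hb : forall k, Cmod (Cmult (RtoC (INR k - 1)) (a k)) <= 1/2).
  { intros k. apply (cauchy_est _ (fun w => Cminus (Cmult w (fp w)) (f w)) (1/2) hp).
    intros w Hw. rewrite heq by exact Hw.
    rewrite !Cmod_mult, Cmod_pow, Cmod_RtoC_pos by lra.
    assert (H1 := hphi_bd w Hw). assert (H2 := Cmod_ge_0 (phi w)). assert (H3 := Cmod_ge_0 w).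
    assert (Cmod w ^ 2 <= 1) by nra. nra. }
  assert (hcoef : forall k, (2 <= k)%nat -> Cmod (a k) <= / (2 * (INR k - 1))).
  { intros k Hk. specialize (hb k). rewrite Cmod_mult, Cmod_R in hb.
    assert (Hk2 : 1 <= INR k - 1) by (replace 2 with (INR 2) by (simpl; ring); assert (INR 2 <= INR k) by (apply le_INR; exact Hk); simpl in *; lra).
    rewrite Rabs_pos_eq in hb by lra.
    apply Rmult_le_reg_l with (2 * (INR k - 1)); [lra|]. rewrite Rinv_r by lra. lra. }
  assert (hcoef1 : forall k, (1 <= k)%nat -> Cmod (a k) <= 1).
  { intros k Hk. destruct (Nat.eq_dec k 1) as [->|Hne].
    - rewrite ha1, Cmod_1. lra.
    - assert (H := hcoef k ltac:(lia)).
      assert (Hk2 : 1 <= INR k - 1) by (replace 2 with (INR 2) by (simpl; ring); assert (INR 2 <= INR k) by (apply le_INR; lia); simpl in *; lra).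
      eapply Rle_trans; [exact H|]. rewrite <- Rinv_1. apply Rinv_le_contravar; lra. }
  assert (ha2 : Cmod (a 2%nat) <= 1/2).
  { eapply Rle_trans; [apply hcoef; lia|]. right. simpl. field. }
  assert (hC : forall w, Cmod w < 1 -> Cmod (Cminus (fp w) (RtoC 1)) <= Cmod w).
  { intros w Hw. destruct (Ceq_dec w (RtoC 0)) as [->|Hw0].
    - assert (E : fp (RtoC 0) = RtoC 1).
      { apply (CS_unique (fun k => Cmult (Cpow (RtoC 0) k) (Cmult (RtoC (INR (S k))) (a (S k))))).
        + apply hA. exact Hw.
        + eapply CS_ext; [|exact (CS_single 0 (RtoC 1))].
          intros k. destruct k as [|k].
          * simpl. rewrite ha1. ring.
          * simpl. ring. }
      rewrite E, Cmod_0. replace (Cminus (RtoC 1) (RtoC 1)) with (RtoC 0) by ring. rewrite Cmod_0. lra.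
    - assert (H := stepC a f fp phi ha0 ha1 hf' hp hphi_bd heq hcoef1 ha2 w Hw Hw0).
      assert (Hwp : 0 < Cmod w) by (apply Cmod_gt_0; exact Hw0).
      assert (E : Cmult w (Cminus (fp w) (RtoC 1)) = Cplus (Cminus (f w) w) (Cmult (RtoC (/ 2)) (Cmult (Cpow w 2) (phi w)))).
      { rewrite <- heq by exact Hw. ring. }
      assert (T : Cmod w * Cmod (Cminus (fp w) (RtoC 1)) <= Cmod w ^ 2 / 2 + / 2 * (Cmod w ^ 2 * 1)).
      { rewrite <- Cmod_mult, E. eapply Rle_trans; [apply Cmod_triangle|].
        rewrite !Cmod_mult, Cmod_pow, Cmod_RtoC_pos by lra.
        assert (H1 := hphi_bd w Hw). assert (0 <= Cmod w ^ 2) by apply pow2_ge_0.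
        apply Rplus_le_compat; [exact H|]. apply Rmult_le_compat_l; [lra|]. apply Rmult_le_compat_l; lra. }
      apply Rmult_le_reg_l with (Cmod w); [exact Hwp|]. nra. }
  assert (hz1 : Cmod z < 1) by lra.
  set (w := Cmod z) in *.
  assert (Hw0 : 0 <= w) by apply Cmod_ge_0.
  set (d := fun k => Cmult (Cpow z k) (Cmult (RtoC (INR (S k))) (a (S k)))).
  assert (Hsn : forall m, @sum_n C_AbelianMonoid d m = sn_deriv a (S m) z).
  { induction m.
    - rewrite sum_O. unfold d. simpl sn_deriv. match goal with |- ?x = ?y => change (@eq C x y) end. simpl. ring.
    - rewrite sum_Sn, IHm. change (plus ?x ?y) with (Cplus x y). unfold d.
      change (sn_deriv a (S (S m)) z) with (Cplus (sn_deriv a (S m) z) (Cmult (RtoC (INR (S (S m)))) (Cmult (a (S (S m))) (Cpow z (S m))))).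
      match goal with |- ?x = ?y => change (@eq C x y) end. ring. }
  assert (hT : CS (fun k => d (n + k)%nat) (Cminus (fp z) (sn_deriv a n z))).
  { apply (is_series_incr_n (K:=C_AbsRing) (V:=C_NormedModule) d n); [lia|].
    change (@sum_n C_NormedModule d (Nat.pred n)) with (@sum_n C_AbelianMonoid d (Nat.pred n)).
    rewrite Hsn. replace (S (pred n)) with n by lia.
    change (plus ?x ?y) with (Cplus x y).
    replace (Cplus (Cminus (fp z) (sn_deriv a n z)) (sn_deriv a n z)) with (fp z) by ring.
    apply hA. exact hz1. }
  set (K := (INR n + 1) / (2 * INR n)).
  assert (Hn2 : 2 <= INR n) by (replace 2 with (INR 2) by (simpl; ring); apply le_INR; exact hn).
  assert (hTb : Cmod (Cminus (fp z) (sn_deriv a n z)) <= K * w ^ n * / (1 - w)).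
  { apply (CS_norm_le _ _ (fun k => K * w ^ n * w ^ k) _ hT).
    - eapply is_series_ext; [|apply (is_series_scal_l (K:=R_AbsRing) (V:=R_NormedModule) (K * w ^ n)); apply is_series_geom; rewrite Rabs_pos_eq; lra].
      intros k. reflexivity.
    - intros k. unfold d. rewrite !Cmod_mult, Cmod_pow, Cmod_RtoC_pos by apply pos_INR.
      fold w. rewrite pow_add.
      assert (Hj : INR n <= INR (n + k)) by (apply le_INR; lia).
      assert (HS : INR (S (n + k)) = INR (n + k) + 1) by apply S_INR.
      assert (Ha := hcoef (S (n + k)) ltac:(lia)). rewrite HS in Ha.
      replace (INR (n + k) + 1 - 1) with (INR (n + k)) in Ha by ring.
      assert (HX : INR (S (n + k)) * Cmod (a (S (n + k))) <= K).
      { rewrite HS. apply Rle_trans with ((INR (n + k) + 1) * / (2 * INR (n + k))).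
        { apply Rmult_le_compat_l; [lra|exact Ha]. }
        unfold K. apply Rmult_le_reg_r with (2 * INR (n + k) * (2 * INR n)). nra.
        field_simplify; try lra; try nra. }
      assert (0 <= w ^ n * w ^ k) by (apply Rmult_le_pos; apply pow_le; lra).
      replace (w ^ n * w ^ k * (INR (S (n + k)) * Cmod (a (S (n + k))))) with ((w ^ n * w ^ k) * (INR (S (n + k)) * Cmod (a (S (n + k))))) by ring.
      replace (K * w ^ n * w ^ k) with ((w ^ n * w ^ k) * K) by ring.
      apply Rmult_le_compat_l; assumption. }
  assert (Hfp1 := hC z hz1). fold w in Hfp1.
  assert (Hfpm : 1 - w <= Cmod (fp z)).
  { assert (T := Cmod_triangle (fp z) (Cminus (RtoC 1) (fp z))).
    replace (Cplus (fp z) (Cminus (RtoC 1) (fp z))) with (RtoC 1) in T by ring. rewrite Cmod_1 in T.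
    replace (Cminus (RtoC 1) (fp z)) with (Copp (Cminus (fp z) (RtoC 1))) in T by ring. rewrite Cmod_opp in T. lra. }
  assert (Hfp0 : fp z <> RtoC 0) by (intros E; rewrite E, Cmod_0 in Hfpm; lra).
  assert (E : Cminus (Cdiv (sn_deriv a n z) (fp z)) (RtoC 1) = Cdiv (Copp (Cminus (fp z) (sn_deriv a n z))) (fp z)) by (field; exact Hfp0).
  rewrite E, Cmod_div by exact Hfp0. rewrite Cmod_opp.
  eapply Rle_trans; [|apply (final_ineq r w n hr ltac:(lra) hn (1 / (1 - w) * (1 / (1 - w))) (Rle_refl _))].
  fold K.
  unfold Rdiv.
  replace (K * w ^ n * (1 * / (1 - w) * (1 * / (1 - w)))) with ((K * w ^ n * / (1 - w)) * / (1 - w)) by ring.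
  apply Rmult_le_compat; [apply Cmod_ge_0| apply Rlt_le, Rinv_0_lt_compat; lra | exact hTb |].
  apply Rinv_le_contravar; lra.
Qed.
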